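(* Consider the algorithm described in the context (with parameters $p\in[0,1]$, $l\in\mathbb{N}$) run on a stream consistent with a representation of size $m$ with at most $k$ exceptions, in which each component has a unique label. Let $t$ be some iteration of the run, let $C[x]$ be some valid rule that exists during this iteration, and let $U(x)$ be the value of its update counter at the end of this iteration. Then the number of exceptions that caused updates to this rule until the end of iteration $t$ is at least $(U(x)-(m-1))/2$.
   Context: Setting. $\mathcal{X}$ is a domain, $\mathcal{Y}$ a finite label set, $\Phi$ a set of binary features on $\mathcal{X}$ closed under negation. A representation of size $m$ is a cover $\mathcal{G}=\{G_1,\dots,G_m\}$ of $\mathcal{X}$ by components with labels $\ell(G)$; each $x$ has a fixed component $G(x)\ni x$; $c^*(x)=\ell(G(x))$; for components $G_i,G_j$ with different labels there is $\phi(G_i,G_j)\in\Phi$ true on all of $G_i$ and false on all of $G_j$, with $\phi(G_j,G_i)=\neg\phi(G_i,G_j)$. Protocol: the learner first gets $x_0$ with label $y_0$; then each example $x_t$ arrives, the learner predicts a label with an explanation example previously seen with that label; on a mistake the teacher gives $y_t=c^*(x_t)$ and a feature $\phi(G(x_t),G(\hat x_t))$, $\hat x_t$ the explanation. An exception is an example on which the feedback is inconsistent with the representation/protocol; at most $k$ examples are exceptions. Non-exception examples are valid; a rule $C[x]$ is valid if $x$ is valid. Algorithm (parameters $p,l$; also uses $m$): receives $(x_0,y_0)$; maintains a list $L$ of rules, each indexed by a representative $x$, with a conjunction $C[x]$ of features, a label $\texttt{label}[x]$, and an update counter $U(x)$. On $x_t$: (a) If some $C[\hat x]\in L$ is satisfied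 by $x_t$, predict $\texttt{label}[\hat x]$ with explanation $\hat x$; if incorrect, receive $y_t$ and feature $\phi_t$; if $\hat x$ satisfies $\neg\phi_t$ and $x_t$ satisfies $\phi_t$, add $\neg\phi_t$ to $C[\hat x]$ (otherwise the conjunction is unchanged); in either case set $U(\hat x)\leftarrow U(\hat x)+1$ and delete the rule if $U(\hat x)\ge m+l-1$. (b) Otherwise, predict $y_0$ with explanation $x_0$; if incorrect, receive $y_t$ and $\phi$; if no rule in $L$ has label $y_t$, draw an independent bit $B$ with success probability $p$ and, if $B=1$, add a new rule with empty conjunction $C[x_t]$, $\texttt{label}[x_t]=y_t$, $U(x_t)=0$; else let $C[\hat x]$ be the rule in $L$ with label $y_t$, remove from $C[\hat x]$ some feature not satisfied by $x_t$, set $U(\hat x)\leftarrow U(\hat x)+1$, and delete the rule if $U(\hat x)\ge m+l-1$. An example ''causes an update'' to a rule if processing it increments that rule's counter $U$. *)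

(* Defs.v *)
From mathcomp Require Import all_boot all_order all_algebra.
Set Implicit Arguments.
Unset Strict Implicit.
Unset Printing Implicit Defensive.

(* Time indices: example x_0 (with label y_0) is the initial example; the   *)
(* iterations are t = 1, 2, ...  and iteration t processes x_t.            *)
(* A rule is identified by the time index r of its representative x_r.     *)
(* Deleted rules are kept in the state with alive = false (bookkeeping     *)
(* only; they are never used again by the algorithm).                      *)

Section Rules.
Variables (F : eqType) (Y : finType).

(* rule = (representative index, conjunction C, label, update counter U, alive) *)
Definition rule := (nat * seq F * Y * nat * bool)%type.
Definition mkRule (r : nat) (C : seq F) (a : Y) (u : nat) (al : bool) : rule :=
  (r, C, a, u, al).
Definition rep (R : rule) : nat := R.1.1.1.1.
Definition conj (R : rule) : seq F := R.1.1.1.2.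
Definition rlab (R : rule) : Y := R.1.1.2.
Definition cnt (R : rule) : nat := R.1.2.
Definition alive (R : rule) : bool := R.2.

(* what happened in an iteration: predicted label, index of the explanation
   example (0 = x_0), and the rule whose counter was incremented, if any *)
Record event := Event { pred : Y; expl : nat; upd : option nat }.
End Rules.

Section Alg.
Variables (X : Type) (Y : finType) (F : eqType) (eval : F -> X -> bool)
  (neg : F -> F).
(* K = m + l - 1 : deletion threshold *)
Variable K : nat.
(* the stream: examples, teacher labels, teacher features, random bits *)
Variables (x : nat -> X) (y : nat -> Y) (ph : nat -> F) (b : nat -> bool).

Definition sat (R : rule F Y) (z : X) : bool := all (fun f => eval f z) (conj R).

Definition bump (R : rule F Y) (C : seq F) : rule F Y :=
  mkRule (rep R) C (rlab R) (cnt R).+1 (~~ (K <= (cnt R).+1)).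

Definition upd_rule (r : nat) (g : rule F Y -> rule F Y) (L : seq (rule F Y)) :=
  map (fun R => if rep R == r then g R else R) L.

Definition no_sat (L : seq (rule F Y)) (z : X) : Prop :=
  forall R, R \in L -> alive R -> ~~ sat R z.

(* one iteration t of the algorithm (nondeterministic choices allowed) *)
Inductive step (t : nat) (L : seq (rule F Y)) : seq (rule F Y) -> event Y -> Prop :=
| StepA_correct R :
    R \in L -> alive R -> sat R (x t) -> rlab R = y t ->
    step t L L (Event (rlab R) (rep R) None)
| StepA_mistake R :
    R \in L -> alive R -> sat R (x t) -> rlab R <> y t ->
    step t L
      (upd_rule (rep R)
         (fun R0 => bump R0
            (if eval (neg (ph t)) (x (rep R)) && eval (ph t) (x t)
             then neg (ph t) :: conj R0 else conj R0)) L)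
      (Event (rlab R) (rep R) (Some (rep R)))
| StepB_correct :
    no_sat L (x t) -> y 0 = y t ->
    step t L L (Event (y 0) 0 None)
| StepB_new :
    no_sat L (x t) -> y 0 <> y t ->
    (forall R, R \in L -> alive R -> rlab R <> y t) ->
    step t L (if b t then rcons L (mkRule t [::] (y t) 0 true) else L)
      (Event (y 0) 0 None)
| StepB_remove R f :
    no_sat L (x t) -> y 0 <> y t ->
    R \in L -> alive R -> rlab R = y t ->
    f \in conj R -> ~~ eval f (x t) ->
    step t L (upd_rule (rep R) (fun R0 => bump R0 (rem f (conj R0))) L)
      (Event (y 0) 0 (Some (rep R))).

(* L t = list of rules at the end of iteration t (L 0 = state after x_0) *)
Definition is_run (L : nat -> seq (rule F Y)) (ev : nat -> event Y) : Prop :=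
  L 0 = [::] /\ forall t, 0 < t -> step t (L t.-1) (L t) (ev t).

(* validity of example s w.r.t. a representation with target cstar and
   separating features phiG i j (i, j components) and component map G *)
Variables (m : nat) (G : X -> 'I_m) (lab : 'I_m -> Y)
  (phi : 'I_m -> 'I_m -> F).

Definition cstar (z : X) : Y := lab (G z).

Definition valid (ev : nat -> event Y) (s : nat) : bool :=
  if s == 0 then y 0 == cstar (x 0)
  else (y s == cstar (x s)) &&
       ((pred (ev s) != y s) ==> (ph s == phi (G (x s)) (G (x (expl (ev s)))))).

Definition exc_updates (ev : nat -> event Y) (r t : nat) : nat :=
  count (fun s => ~~ valid ev s && (upd (ev s) == Some r)) (iota 1 t).

End Alg.

(* Main.v *)
Require Import Defs.
From mathcomp Require Import all_boot all_order all_algebra.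
Set Implicit Arguments.
Unset Strict Implicit.
Unset Printing Implicit Defensive.

Definition Gd (T : eqType) (isg : pred T) (C : seq T) := size (undup (filter isg C)).
Definition Bd (T : eqType) (isg : pred T) (C : seq T) := count (predC isg) C.

Lemma Gd_cons (T : eqType) (isg : pred T) f C : Gd isg C <= Gd isg (f :: C).
Proof. rewrite /Gd /=; case: (isg f) => //=; case: ifP => //=. Qed.

Lemma Gd_cons_new (T : eqType) (isg : pred T) f C :
  isg f -> f \notin C -> Gd isg (f :: C) = (Gd isg C).+1.
Proof.
rewrite /Gd /= => -> fC /=; rewrite mem_filter (negbTE fC) andbF //.
Qed.

Lemma Gd_rem (T : eqType) (isg : pred T) f C : Gd isg C <= (Gd isg (rem f C)).+1.
Proof.
rewrite /Gd -[(size _).+1]/(size (f :: undup (filter isg (rem f C)))).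
apply: uniq_leq_size; first exact: undup_uniq.
move=> g; rewrite mem_undup mem_filter => /andP [gg gC].
rewrite inE mem_undup mem_filter gg /=.
case: (eqVneq g f) => //= ne; exact: rem_mem.
Qed.

Lemma filter_rem_bad (T : eqType) (isg : pred T) f C :
  ~~ isg f -> filter isg (rem f C) = filter isg C.
Proof.
move=> nf; elim: C => //= g C IH; case: (eqVneq g f) => [->|ne] /=.
  by rewrite (negbTE nf).
by rewrite IH.
Qed.

Lemma uniq_rep (F : eqType) (Y : finType) (L : seq (rule F Y)) R1 R2 :
  uniq (map (@rep F Y) L) -> R1 \in L -> R2 \in L -> rep R1 = rep R2 -> R1 = R2.
Proof.
elim: L => //= R L IH /andP [nR u]; rewrite !inE.
case/orP=> [/eqP->|h1]; case/orP=> [/eqP->|h2] //.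
- move=> e; case/negP: nR; rewrite e; exact: map_f.
- move=> e; case/negP: nR; rewrite -e; exact: map_f.
- exact: IH.
Qed.

Lemma mem_upd (F : eqType) (Y : finType) q g (L : seq (rule F Y)) R' :
  R' \in upd_rule q g L -> exists2 R0, R0 \in L & R' = if rep R0 == q then g R0 else R0.
Proof. by case/mapP=> R0 h ->; exists R0. Qed.

Lemma map_rep_upd (F : eqType) (Y : finType) q g (L : seq (rule F Y)) :
  (forall R, rep (g R) = rep R) -> map (@rep F Y) (upd_rule q g L) = map (@rep F Y) L.
Proof.
move=> h; rewrite /upd_rule -map_comp; apply: eq_map => R /=; case: ifP => //.
Qed.

Lemma rep_bump (F : eqType) (Y : finType) K (R : rule F Y) C : rep (Defs.bump K R C) = rep R.
Proof. by []. Qed.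
Lemma rlab_bump (F : eqType) (Y : finType) K (R : rule F Y) C : rlab (Defs.bump K R C) = rlab R.
Proof. by []. Qed.
Lemma cnt_bump (F : eqType) (Y : finType) K (R : rule F Y) C : cnt (Defs.bump K R C) = (cnt R).+1.
Proof. by []. Qed.
Lemma conj_bump (F : eqType) (Y : finType) K (R : rule F Y) C : Defs.conj (Defs.bump K R C) = C.
Proof. by []. Qed.

Lemma Gd_lt (F : eqType) (Y : finType) (m : nat) (lab : 'I_m -> Y) (neg : F -> F)
  (phi : 'I_m -> 'I_m -> F) (gr : 'I_m) C :
  Gd (fun f => [exists j, (lab j != lab gr) && (f == neg (phi j gr))]) C < m.
Proof.
set P := fun j : 'I_m => lab j != lab gr.
have h : Gd (fun f => [exists j, (lab j != lab gr) && (f == neg (phi j gr))]) C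
          <= size (map (fun j => neg (phi j gr)) (filter P (enum 'I_m))).
  apply: uniq_leq_size; first exact: undup_uniq.
  move=> g; rewrite mem_undup mem_filter => /andP [/existsP [j /andP [nj /eqP ->]] _].
  by apply/mapP; exists j; rewrite // mem_filter mem_enum andbT.
apply: (leq_ltn_trans h); rewrite size_map size_filter.
have e := count_predC P (enum 'I_m); rewrite size_enum_ord in e.
rewrite -[X in _ < X]e.
rewrite -addn1 leq_add2l -has_count; apply/hasP; exists gr; first by rewrite mem_enum.
by rewrite /= /P eqxx.
Qed.

Lemma Bd_cons (T : eqType) (isg : pred T) f C : Bd isg (f :: C) = (~~ isg f + Bd isg C)%N.
Proof. by []. Qed.

Lemma Bd_rem (T : eqType) (isg : pred T) f C :
  Bd isg (rem f C) = (Bd isg C - ((f \in C) && ~~ isg f))%N.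
Proof. exact: count_rem. Qed.

From mathcomp Require Import zify.
Lemma arith1 (c B G G' E bb : nat) : c + B <= G + 2 * E -> G <= G' -> bb <= 1 ->
  c.+1 + (bb + B) <= G' + 2 * (E + 1).
Proof. lia. Qed.
Lemma arith2 (c B G E : nat) : c + B <= G + 2 * E -> c.+1 + B <= G + 2 * (E + 1).
Proof. lia. Qed.
Lemma arith3 (c B G E : nat) : c + B <= G + 2 * E -> 0 < B -> c.+1 + (B - 1) <= G + 2 * (E + 0).
Proof. lia. Qed.
Lemma arith4 (c B G G' E bb : nat) : c + B <= G + 2 * E -> G <= G'.+1 ->
  c.+1 + (B - bb) <= G' + 2 * (E + 1).
Proof. lia. Qed.
Lemma arith5 (c B G E m : nat) : c + B <= G + 2 * E -> G < m -> c.+1 <= m + 2 * E.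
Proof. lia. Qed.
Lemma arith0 (c B G E : nat) : c + B <= G + 2 * E -> c.+1 + (false + B) <= G.+1 + 2 * (E + 0).
Proof. lia. Qed.

Import Order.TTheory GRing.Theory Num.Theory.
From mathcomp Require Import lra.
Local Open Scope ring_scope.

Theorem lemma5
  (X : Type) (Y : finType) (F : eqType) (eval : F -> X -> bool) (neg : F -> F)
  (neg_eval : forall f z, eval (neg f) z = ~~ eval f z)
  (m : nat) (memG : 'I_m -> X -> bool) (G : X -> 'I_m) (lab : 'I_m -> Y)
  (phi : 'I_m -> 'I_m -> F)
  (G_mem : forall z, memG (G z) z)
  (phi_true : forall i j, lab i != lab j -> forall z, memG i z -> eval (phi i j) z)
  (phi_false : forall i j, lab i != lab j -> forall z, memG j z -> ~~ eval (phi i j) z)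
  (phi_neg : forall i j, lab i != lab j -> phi j i = neg (phi i j))
  (lab_inj : injective lab)
  (p : rat) (p_ge0 : 0 <= p) (p_le1 : p <= 1) (l : nat)
  (x : nat -> X) (y : nat -> Y) (ph : nat -> F) (b : nat -> bool)
  (b_real : forall s, (b s -> 0 < p) /\ (~~ b s -> p < 1))
  (L : nat -> seq (rule F Y)) (ev : nat -> event Y)
  (run : is_run eval neg (m + l - 1) x y ph b L ev)
  (k : nat)
  (few_exc : forall T, (count (fun s => ~~ valid x y ph G lab phi ev s) (iota 0 T) <= k)%N)
  (t r : nat) (t_pos : (0 < t)%N)
  (r_exists : (exists2 R, R \in L t.-1 & (rep R == r) && alive R)
              \/ (r = t /\ exists2 R, R \in L t & rep R == r))
  (r_valid : valid x y ph G lab phi ev r)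
  (R : rule F Y) (R_in : R \in L t) (R_rep : rep R = r) :
  ((cnt R)%:R - (m%:R - 1)) / 2 <= (exc_updates x y ph G lab phi ev r t)%:R :> rat.
Proof.
case: run => L0 stepH.
set gr := G (x r).
set isg := fun f : F => [exists j, (lab j != lab gr) && (f == neg (phi j gr))].
set E := fun s => exc_updates x y ph G lab phi ev r s.
have yr : y r = lab gr.
  move: r_valid; rewrite /valid /cstar; case: eqP => [r0|_]; [by move/eqP; rewrite /gr r0 | by case/andP => /eqP].
have inv : forall s, [/\ (forall R, R \in L s -> rlab R = y (rep R)),
   (forall R, R \in L s -> (rep R <= s)%N), uniq (map (@rep F Y) (L s)) &
   (forall R, R \in L s -> rep R = r ->
      (cnt R + Bd isg (Defs.conj R) <= Gd isg (Defs.conj R) + 2 * E s)%N)].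
  elim => [|s [I1 I2 I3 I4]]; first by rewrite L0.
  have st := stepH s.+1 isT; rewrite /= in st.
  have ES : E s.+1 = (E s + (~~ valid x y ph G lab phi ev s.+1 && (upd (ev s.+1) == Some r)))%N.
    rewrite /E /exc_updates.
    have -> : iota 1%N s.+1 = iota 1%N s ++ [:: s.+1].
      by rewrite -[s.+1]addn1 iotaD add1n addn1.
    by rewrite count_cat /= addn0.
  have Emon : (E s <= E s.+1)%N by rewrite ES leq_addr.
  have I4' : forall R, R \in L s -> rep R = r ->
      (cnt R + Bd isg (Defs.conj R) <= Gd isg (Defs.conj R) + 2 * E s.+1)%N.
    move=> R1 h1 h2; apply: (leq_trans (I4 R1 h1 h2)); by rewrite leq_add2l leq_mul2l Emon orbT.
  have I2' : forall R, R \in L s -> (rep R <= s.+1)%N by move=> R1 /I2 /leqW.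
  remember (L s.+1) as L' eqn:EL; remember (ev s.+1) as e eqn:Ee.
  destruct st as [R0 hin hal hsat hlab|R0 hin hal hsat hlab|hns hy|hns hy hnl|R0 f hns hy hin hal hlab hf hev].
  - by split.
  - split.
    + move=> R1 /mem_upd [R2 h2 ->]; case: ifP => _; [rewrite rlab_bump rep_bump|]; exact: I1.
    + move=> R1 /mem_upd [R2 h2 ->]; case: ifP => _; [rewrite rep_bump|]; exact: I2'.
    + by rewrite map_rep_upd.
    + move=> R1 /mem_upd [R2 h2 ->]; case: (eqVneq (rep R2) (rep R0)) => [e2|ne2]; last first.
        by move=> er; exact: I4'.
      have ? : R2 = R0 := uniq_rep I3 h2 hin e2.
      subst R2; rewrite rep_bump cnt_bump conj_bump => er.
      have h := I4 R0 hin er.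
      rewrite ES /= er eqxx andbT.
      case V: (valid x y ph G lab phi ev s.+1) => /=.
      * move: V; rewrite /valid /= -Ee /= => /andP [/eqP ys imp].
        rewrite /cstar in ys.
        have lne : rlab R0 != y s.+1 by apply/eqP.
        rewrite lne /= in imp; move/eqP: imp => eph.
        rewrite er -/gr in eph.
        set j := G (x s.+1) in ys eph.
        have labne : lab j != lab gr.
          by rewrite -ys -yr -er -I1 // eq_sym.
        have c1 : eval (neg (ph s.+1)) (x (rep R0)).
          by rewrite eph neg_eval er; apply: phi_false => //; exact: G_mem.
        have c2 : eval (ph s.+1) (x s.+1).
          by rewrite eph; apply: phi_true => //; exact: G_mem.
        rewrite er in c1; rewrite c1 c2 /=.
        have gnew : isg (neg (ph s.+1)) by apply/existsP; exists j; rewrite labne eph eqxx.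
        have nin : neg (ph s.+1) \notin Defs.conj R0.
          apply/negP => hin'; move: hsat; rewrite /sat => /allP /(_ _ hin').
          by rewrite eph neg_eval phi_true //; exact: G_mem.
        rewrite Gd_cons_new // ?Bd_cons gnew.
        exact: arith0.
      * case: ifP => _.
          have := Gd_cons isg (neg (ph s.+1)) (Defs.conj R0).
          rewrite Bd_cons => hg; apply: arith1 h hg _; exact: leq_b1.
        exact: arith2.
  - by split.
  - case: (b s.+1).
    + split.
      * move=> R1; rewrite mem_rcons inE => /orP [/eqP -> //| /I1 //].
      * move=> R1; rewrite mem_rcons inE => /orP [/eqP -> //| /I2' //].
      * rewrite map_rcons rcons_uniq I3 andbT; apply/negP => /mapP [R1 h1 e1].
        by have := I2 _ h1; rewrite -e1 ltnn.
      * move=> R1; rewrite mem_rcons inE => /orP [/eqP -> _ //| h1 er]; exact: I4'.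
    + by split.
  - split.
    + move=> R1 /mem_upd [R2 h2 ->]; case: ifP => _; [rewrite rlab_bump rep_bump|]; exact: I1.
    + move=> R1 /mem_upd [R2 h2 ->]; case: ifP => _; [rewrite rep_bump|]; exact: I2'.
    + by rewrite map_rep_upd.
    + move=> R1 /mem_upd [R2 h2 ->]; case: (eqVneq (rep R2) (rep R0)) => [e2|ne2]; last first.
        by move=> er; exact: I4'.
      have ? : R2 = R0 := uniq_rep I3 h2 hin e2.
      subst R2; rewrite rep_bump cnt_bump conj_bump => er.
      have h := I4 R0 hin er.
      rewrite ES /= er eqxx andbT.
      case V: (valid x y ph G lab phi ev s.+1) => /=.
      * move: V; rewrite /valid /= => /andP [/eqP ys _].
        rewrite /cstar in ys.
        have eG : G (x s.+1) = gr.
          by apply: lab_inj; rewrite -ys -hlab I1 // er.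
        have fbad : ~~ isg f.
          apply/negP => /existsP [j /andP [nj /eqP ef]].
          move: hev; rewrite ef neg_eval negbK; apply/negP; apply: phi_false nj _ _.
          by rewrite -eG; exact: G_mem.
        have pos : (0 < Bd isg (Defs.conj R0))%N.
          by rewrite /Bd -has_count; apply/hasP; exists f.
        rewrite Bd_rem hf fbad /Gd filter_rem_bad // -/(Gd isg _).
        exact: arith3.
      * have := Gd_rem isg f (Defs.conj R0).
        rewrite Bd_rem => hg; exact: arith4 h hg.
have [_ _ _ I4t] := inv t.
have h := I4t R R_in R_rep.
have hg : (Gd isg (Defs.conj R) < m)%N := Gd_lt lab neg phi gr (Defs.conj R).
have H : ((cnt R).+1 <= m + 2 * E t)%N := arith5 h hg.
rewrite /E /= in H.
move: H; rewrite -(ler_nat rat) -natr1 natrD natrM => H.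
rewrite ler_pdivrMr //. 
lra.
Qed.
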